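(* Let $G=(U,V,E)$ be a path-restricted ordered bipartite graph and let $v$ be a vertex of $G$. Then the subgraph of $G$ induced by the vertex set of $T_r(v)$ has exactly $n-1$ edges, where $n$ is the number of vertices spanned by $T_r(v)$.
   Context: An ordered bipartite graph is $G=(U,V,E)$ where $U,V$ are disjoint finite sets, each carrying a strict total order (both written $<$), and $E\subseteq U\times V$. A path is a sequence of edges in which consecutive edges share a vertex. A path visiting the vertices of $U$ in the order $u_1,\dots,u_k$ and those of $V$ in the order $v_1,\dots,v_l$ is a forward path if either $u_1<\dots<u_k$ and $v_1<\dots<v_l$, or $u_1>\dots>u_k$ and $v_1>\dots>v_l$. For $x\le y$ in $U$ write $\langle x,y\rangle=\{u\in U: x\le u\le y\}$, and similarly in $V$. If $u_a<u_b$ are the smallest and largest $U$-vertices and $v_c<v_d$ the smallest and largest $V$-vertices of a forward path $P$, the range of $P$ is $\{\langle u_a,u_b\rangle,\langle v_c,v_d\rangle\}$. A vertex of $P$ is non-terminal if it is adjacent along $P$ to two vertices of $P$. An edge is a back edge to $P$ if either it is $(u_a,v_j)$ with $v_j\in\langle v_c,v_d\rangle$ and $v_j>v'$ for some non-terminal vertex $v'\in V$ of $P$, or it is $(u_i,v_c)$ with $u_i\in\langle u_a,u_b\rangle$ and $u_i>u'$ for some non-terminal vertex $u'\in U$ of $P$. $G$ is a path-restricted ordered bipartite graph (PRBG) if no forward path in $G$ has a back edge in $E$. $T_r(v)$ denotes the subgraph formed by the union of all forward paths starting at $v$ along which the orders of the visited vertices decrease (in both $U$ and $V$); its vertices are said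 to be spanned by $T_r(v)$. *)

(* Defs.v *)
From mathcomp Require Import all_boot all_order.
Set Implicit Arguments. Unset Strict Implicit. Unset Printing Implicit Defensive.
Import Order.TTheory.
Local Open Scope order_scope.

Definition is_minl {d} {T : orderType d} (l : seq T) (a : T) : Prop :=
  a \in l /\ {in l, forall b, a <= b}.
Definition is_maxl {d} {T : orderType d} (l : seq T) (a : T) : Prop :=
  a \in l /\ {in l, forall b, b <= a}.

Section OrderedBipartite.
Context {dU dV : Order.disp_t} {U : finOrderType dU} {V : finOrderType dV}.
(* Ordered bipartite graph G = (U, V, E): U, V finite totally ordered,
   disjointness is built in by using the sum type U + V for the vertices. *)
Variable E : U -> V -> bool.

Definition adj : rel (U + V) := fun x y =>
  match x, y with
  | inl u, inr v => E u v
  | inr v, inl u => E u v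
  | _, _ => false
  end.

Definition uverts (s : seq (U + V)) : seq U :=
  pmap (fun x => if x is inl u then Some u else None) s.
Definition vverts (s : seq (U + V)) : seq V :=
  pmap (fun x => if x is inr v then Some v else None) s.

Definition is_path (s : seq (U + V)) : bool :=
  if s is x :: s' then path adj x s' else false.

Definition forward_path (s : seq (U + V)) : bool :=
  is_path s &&
  ((sorted (fun a b : U => a < b) (uverts s) &&
    sorted (fun a b : V => a < b) (vverts s))
   || (sorted (fun a b : U => a > b) (uverts s) &&
       sorted (fun a b : V => a > b) (vverts s))).

Definition nonterminal (s : seq (U + V)) (x : U + V) : Prop :=
  exists2 i, (0 < i < (size s).-1)%N & nth x s i = x.

Definition back_edge (s : seq (U + V)) (u : U) (v : V) : Prop :=
  (exists ua vc vd,
     is_minl (uverts s) ua /\ is_minl (vverts s) vc /\ is_maxl (vverts s) vd /\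
     u = ua /\ vc <= v <= vd /\
     (exists2 v', nonterminal s (inr v') & v' < v))
  \/
  (exists ua ub vc,
     is_minl (uverts s) ua /\ is_maxl (uverts s) ub /\ is_minl (vverts s) vc /\
     v = vc /\ ua <= u <= ub /\
     (exists2 u', nonterminal s (inl u') & u' < u)).

Definition PRBG : Prop :=
  forall s, forward_path s -> forall u v, E u v -> ~ back_edge s u v.

Definition dec_path_from (x : U + V) (s : seq (U + V)) : bool :=
  [&& is_path s, head x s == x,
      sorted (fun a b : U => a > b) (uverts s) &
      sorted (fun a b : V => a > b) (vverts s)].

Definition Tr_spanned (x y : U + V) : Prop :=
  exists2 s, dec_path_from x s & y \in s.

Definition induced_edges (S : {set U + V}) : {set U * V} :=
  [set e : U * V | [&& E e.1 e.2, (inl e.1 : U + V) \in S & (inr e.2 : U + V) \in S]].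

End OrderedBipartite.

(* Main.v *)
Require Import Defs.
From mathcomp Require Import all_boot all_order.
Set Implicit Arguments. Unset Strict Implicit. Unset Printing Implicit Defensive.
Import Order.TTheory.
Local Open Scope order_scope.

Section H.
Context {dU dV : Order.disp_t} {U : finOrderType dU} {V : finOrderType dV}.
Variable E : U -> V -> bool.

Lemma adjC (x y : U + V) : adj E x y = adj E y x.
Proof. by case: x; case: y. Qed.

Lemma uverts_cat (s t : seq (U + V)) : uverts (s ++ t) = uverts s ++ uverts t.
Proof. by rewrite /uverts pmap_cat. Qed.
Lemma vverts_cat (s t : seq (U + V)) : vverts (s ++ t) = vverts s ++ vverts t.
Proof. by rewrite /vverts pmap_cat. Qed.

Lemma uverts_rev (s : seq (U + V)) : uverts (rev s) = rev (uverts s).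
Proof.
elim: s => // x s IH; rewrite rev_cons -cats1 uverts_cat IH.
by case: x => a /=; rewrite ?cats0 // rev_cons cats1.
Qed.
Lemma vverts_rev (s : seq (U + V)) : vverts (rev s) = rev (vverts s).
Proof.
elim: s => // x s IH; rewrite rev_cons -cats1 vverts_cat IH.
by case: x => a /=; rewrite ?cats0 // rev_cons cats1.
Qed.

Lemma mem_uverts (s : seq (U + V)) u : (inl u \in s) = (u \in uverts s).
Proof. by elim: s => // [[a|a] s IH] /=; rewrite !inE IH. Qed.
Lemma mem_vverts (s : seq (U + V)) u : (inr u \in s) = (u \in vverts s).
Proof. by elim: s => // [[a|a] s IH] /=; rewrite !inE IH. Qed.

Lemma is_path_rev (s : seq (U + V)) : is_path E s -> is_path E (rev s).
Proof.
case: s => // x p /= H.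
rewrite lastI rev_rcons /= rev_path.
by rewrite (eq_path (e' := adj E)) // => a b; rewrite adjC.
Qed.

Lemma gt_transU : transitive (fun a b : U => a > b).
Proof. by move=> a b c H1 H2; exact: lt_trans H2 H1. Qed.
Lemma gt_transV : transitive (fun a b : V => a > b).
Proof. by move=> a b c H1 H2; exact: lt_trans H2 H1. Qed.

Lemma sorted_rev_lt {d} {T : orderType d} (l : seq T) :
  sorted (fun a b => a > b) l -> sorted (fun a b => a < b) (rev l).
Proof. by rewrite rev_sorted. Qed.

Lemma head_minl {d} {T : orderType d} (a : T) l :
  sorted (fun a b => a < b) (a :: l) -> is_minl (a :: l) a.
Proof.
move=> H; split; first by rewrite inE eqxx.
move=> b; rewrite inE => /orP [/eqP -> //|Hb].
have := order_path_min (@lt_trans _ T) H => /allP /(_ _ Hb) /ltW //.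
Qed.

Lemma head_maxl {d} {T : orderType d} (a : T) l :
  sorted (fun a b => a > b) (a :: l) -> is_maxl (a :: l) a.
Proof.
move=> H; split; first by rewrite inE eqxx.
move=> b; rewrite inE => /orP [/eqP -> //|Hb].
have tr : transitive (fun a b : T => a > b) by move=> x y z H1 H2; exact: lt_trans H2 H1.
by have := order_path_min tr H => /allP /(_ _ Hb) /ltW.
Qed.


Lemma backU (HG : PRBG E) (t0 : seq (U + V)) (p z : V) (y : U) (M : V) :
  t0 != [::] ->
  is_path E (t0 ++ [:: inr p; inl y]) ->
  sorted (fun a b => a > b) (uverts (t0 ++ [:: inr p; inl y])) ->
  sorted (fun a b => a > b) (vverts (t0 ++ [:: inr p; inl y])) ->
  is_maxl (vverts (t0 ++ [:: inr p; inl y])) M -> p < z -> z <= M -> E y z -> False.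
Proof.
move=> t0n Hp Hu Hv [MI Mmax] pz zM Eyz.
have Hr : rev (t0 ++ [:: inr p; inl y]) = inl y :: inr p :: rev t0 by rewrite rev_cat.
have Hu' := sorted_rev_lt Hu; have Hv' := sorted_rev_lt Hv.
rewrite -uverts_rev Hr /= in Hu'. rewrite -vverts_rev Hr /= in Hv'.
have Hf : forward_path E (rev (t0 ++ [:: inr p; inl y])).
  by rewrite /forward_path is_path_rev //= Hr /= Hu' Hv'.
apply: (HG _ Hf _ _ Eyz); left; exists y, p, M.
have MI' : M \in vverts (rev (t0 ++ [:: inr p; inl y])) by rewrite vverts_rev mem_rev.
have Mm' : {in vverts (rev (t0 ++ [:: inr p; inl y])), forall b, b <= M}.
  by move=> b; rewrite vverts_rev mem_rev; apply: Mmax.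
rewrite Hr /= in MI' Mm' *. split; first exact: head_minl.
split; first exact: head_minl.
split; first by split.
split=> //; split; first by rewrite (ltW pz).
exists p => //; exists 1%N => //=.
by move: t0n; rewrite size_rev; case: (t0).
Qed.

Lemma backV (HG : PRBG E) (t0 : seq (U + V)) (p z : U) (y : V) (M : U) :
  t0 != [::] ->
  is_path E (t0 ++ [:: inl p; inr y]) ->
  sorted (fun a b => a > b) (uverts (t0 ++ [:: inl p; inr y])) ->
  sorted (fun a b => a > b) (vverts (t0 ++ [:: inl p; inr y])) ->
  is_maxl (uverts (t0 ++ [:: inl p; inr y])) M -> p < z -> z <= M -> E z y -> False.
Proof.
move=> t0n Hp Hu Hv [MI Mmax] pz zM Eyz.
have Hr : rev (t0 ++ [:: inl p; inr y]) = inr y :: inl p :: rev t0 by rewrite rev_cat.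
have Hu' := sorted_rev_lt Hu; have Hv' := sorted_rev_lt Hv.
rewrite -uverts_rev Hr /= in Hu'. rewrite -vverts_rev Hr /= in Hv'.
have Hf : forward_path E (rev (t0 ++ [:: inl p; inr y])).
  by rewrite /forward_path is_path_rev //= Hr /= Hu' Hv'.
apply: (HG _ Hf _ _ Eyz); right; exists p, M, y.
have MI' : M \in uverts (rev (t0 ++ [:: inl p; inr y])) by rewrite uverts_rev mem_rev.
have Mm' : {in uverts (rev (t0 ++ [:: inl p; inr y])), forall b, b <= M}.
  by move=> b; rewrite uverts_rev mem_rev; apply: Mmax.
rewrite Hr /= in MI' Mm' *. split; first exact: head_minl.
split; first by split.
split; first exact: head_minl.
split=> //; split; first by rewrite (ltW pz).
exists p => //; exists 1%N => //=.
by move: t0n; rewrite size_rev; case: (t0).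
Qed.

End H.
Section M.
Context {dU dV : Order.disp_t} {U : finOrderType dU} {V : finOrderType dV}.
Variable E : U -> V -> bool.
Hypothesis HG : PRBG E.
Variable v : U + V.
Variable S : {set U + V}.
Hypothesis HS : forall y, y \in S <-> Tr_spanned E v y.

Definition dec := dec_path_from E v.

Lemma dec_cons Q : dec Q -> Q != [::] -> exists Q1, Q = v :: Q1.
Proof. by case: Q => // a Q1 /and4P [_ /= /eqP -> _ _] _; exists Q1. Qed.

Lemma dec_head_u Q u0 z : dec Q -> v = inl u0 -> inl z \in Q -> z <= u0.
Proof.
move=> Hd Hv Hz; have Qn : Q != [::] by move: Hz; case: (Q).
have [Q1 HQ] := dec_cons Hd Qn.
move: Hd Hz; rewrite HQ Hv => /and4P [_ _ Hu _].
rewrite mem_uverts => Hz; move: Hu; rewrite /= => Hu.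
by have [_] := head_maxl Hu; apply.
Qed.

Lemma dec_head_v Q w0 z : dec Q -> v = inr w0 -> inr z \in Q -> z <= w0.
Proof.
move=> Hd Hv Hz; have Qn : Q != [::] by move: Hz; case: (Q).
have [Q1 HQ] := dec_cons Hd Qn.
move: Hd Hz; rewrite HQ Hv => /and4P [_ _ _ Hu].
rewrite mem_vverts => Hz; move: Hu; rewrite /= => Hu.
by have [_] := head_maxl Hu; apply.
Qed.

Lemma dec_second_v Q u0 z : dec Q -> v = inl u0 -> inr z \in Q ->
  exists w, E u0 w /\ z <= w.
Proof.
move=> Hd Hv Hz; have Qn : Q != [::] by move: Hz; case: (Q).
have [Q1 HQ] := dec_cons Hd Qn.
move: Hd Hz; rewrite HQ Hv; case: Q1 {HQ} => [|[q|q] Q2]; first by rewrite inE.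
  by case/and4P.
case/and4P => /= /andP [Eq _] _ _ Hs; rewrite inE /= mem_vverts => Hz.
by exists q; split => //; have [_] := head_maxl Hs; apply.
Qed.

Lemma dec_second_u Q w0 z : dec Q -> v = inr w0 -> inl z \in Q ->
  exists u, E u w0 /\ z <= u.
Proof.
move=> Hd Hv Hz; have Qn : Q != [::] by move: Hz; case: (Q).
have [Q1 HQ] := dec_cons Hd Qn.
move: Hd Hz; rewrite HQ Hv; case: Q1 {HQ} => [|[q|q] Q2]; first by rewrite inE.
  case/and4P => /= /andP [Eq _] _ Hs _; rewrite inE /= mem_uverts => Hz.
  by exists q; split => //; have [_] := head_maxl Hs; apply.
by case/and4P.
Qed.


Lemma dec_prefix s t : dec (s ++ t) -> s != [::] -> dec s.
Proof.
case: s => // a s /and4P [Hp Hh Hu Hv] _.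
apply/and4P; split => //.
- by move: Hp; rewrite /= cat_path => /andP [].
- by move: Hu; rewrite uverts_cat => /cat_sorted2 [].
- by move: Hv; rewrite vverts_cat => /cat_sorted2 [].
Qed.

Lemma dec_inS s y : dec s -> y \in s -> y \in S.
Proof. by move=> Hd Hy; apply/HS; exists s. Qed.

Definition ispred (y p : U + V) := exists s', dec (s' ++ [:: p; y]).

Lemma path_last2 (s : seq (U + V)) a b : is_path E (s ++ [:: a; b]) -> adj E a b.
Proof.
case: s => [|x s] /=; first by rewrite andbT.
by rewrite cat_path => /andP [_] /= /and3P [].
Qed.

Lemma ispred_adj y p : ispred y p -> p \in S /\ adj E y p.
Proof.
case=> s' Hd; split; first by apply: dec_inS Hd _; rewrite mem_cat !inE eqxx orbT.
by rewrite adjC; case/and4P: Hd => /path_last2.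
Qed.

Lemma exists_pred y : y \in S -> y != v -> exists p, ispred y p.
Proof.
move=> /HS [s Hd Hy] yv.
have Hi : (index y s < size s)%N by rewrite index_mem.
have Ht : take (index y s).+1 s = rcons (take (index y s) s) y.
  by rewrite (take_nth y Hi) nth_index.
have Hd' : dec (rcons (take (index y s) s) y).
  by rewrite -Ht; apply: (dec_prefix (t := drop (index y s).+1 s)); rewrite ?cat_take_drop // Ht -size_eq0 size_rcons.
have tn : take (index y s) s != [::].
  apply/negP => /eqP e; move: Hd'; rewrite e /= => /and4P [_ /eqP ey _ _].
  by move: ey; rewrite /= => ey; rewrite ey eqxx in yv.
move: tn Hd'; case/lastP: (take _ _) => // t' p _ Hd'.
by exists p, t'; rewrite -cats1 -cats1 -catA in Hd'.
Qed.


Lemma KLU (y : U) (p z : V) : ispred (inl y) (inr p) -> inr z \in S -> E y z -> z <= p.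
Proof.
case=> s' Hd zS Eyz; rewrite leNgt; apply/negP => pz.
have [Q HQ zQ] := (HS _).1 zS.
case/and4P: (Hd) => Hp Hh Hu Hv.
have [s'n|s'n] := altP (s' =P [::]).
  move: Hh; rewrite s'n /= => /eqP Ev.
  by have := dec_head_v HQ (esym Ev) zQ; rewrite leNgt pz.
case: s' s'n Hd Hp Hh Hu Hv => // a s1 _ Hd Hp Hh Hu Hv.
move: Hh => /= /eqP Ha.
case El : (vverts ((a :: s1) ++ [:: inr p; inl y])) => [|M l'].
  by move/(congr1 size): El; rewrite vverts_cat size_cat /= addnS.
have Hmax : is_maxl (vverts ((a :: s1) ++ [:: inr p; inl y])) M.
  by rewrite El; apply: head_maxl; rewrite -El.
have [zM|Mz] := leP z M.
  by apply: (backU HG (t0 := a :: s1)) Hp Hu Hv Hmax pz zM Eyz.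
case Ev: v => [u0|w0].
  have [w [Ew zw]] := dec_second_v HQ Ev zQ.
  apply: (backU HG (t0 := inr w :: a :: s1) (p := p) (z := z) (y := y) (M := w)) => //.
  - by rewrite /= Ha Ev /= Ew; move: Hp; rewrite Ha Ev.
  - have -> : vverts ((inr w :: a :: s1) ++ [:: inr p; inl y]) = w :: M :: l' by rewrite -El.
    rewrite /= (lt_le_trans Mz zw) /=; move: Hv; rewrite El //.
  - have -> : vverts ((inr w :: a :: s1) ++ [:: inr p; inl y]) = w :: M :: l' by rewrite -El.
    by apply: head_maxl; rewrite /= (lt_le_trans Mz zw) /=; move: Hv; rewrite El.
move: El; rewrite Ha Ev /= => [[eM _]].
by have := dec_head_v HQ Ev zQ; rewrite eM leNgt Mz.
Qed.

Lemma KLV (y : V) (p z : U) : ispred (inr y) (inl p) -> inl z \in S -> E z y -> z <= p.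
Proof.
case=> s' Hd zS Eyz; rewrite leNgt; apply/negP => pz.
have [Q HQ zQ] := (HS _).1 zS.
case/and4P: (Hd) => Hp Hh Hu Hv.
have [s'n|s'n] := altP (s' =P [::]).
  move: Hh; rewrite s'n /= => /eqP Ev.
  by have := dec_head_u HQ (esym Ev) zQ; rewrite leNgt pz.
case: s' s'n Hd Hp Hh Hu Hv => // a s1 _ Hd Hp Hh Hu Hv.
move: Hh => /= /eqP Ha.
case El : (uverts ((a :: s1) ++ [:: inl p; inr y])) => [|M l'].
  by move/(congr1 size): El; rewrite uverts_cat size_cat /= addnS.
have Hmax : is_maxl (uverts ((a :: s1) ++ [:: inl p; inr y])) M.
  by rewrite El; apply: head_maxl; rewrite -El.
have [zM|Mz] := leP z M.
  by apply: (backV HG (t0 := a :: s1)) Hp Hu Hv Hmax pz zM Eyz.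
case Ev: v => [u0|w0]; last first.
  have [w [Ew zw]] := dec_second_u HQ Ev zQ.
  apply: (backV HG (t0 := inl w :: a :: s1) (p := p) (z := z) (y := y) (M := w)) => //.
  - by rewrite /= Ha Ev /= Ew; move: Hp; rewrite Ha Ev.
  - have -> : uverts ((inl w :: a :: s1) ++ [:: inl p; inr y]) = w :: M :: l' by rewrite -El.
    rewrite /= (lt_le_trans Mz zw) /=; move: Hu; rewrite El //.
  - have -> : uverts ((inl w :: a :: s1) ++ [:: inl p; inr y]) = w :: M :: l' by rewrite -El.
    by apply: head_maxl; rewrite /= (lt_le_trans Mz zw) /=; move: Hu; rewrite El.
move: El; rewrite Ha Ev /= => [[eM _]].
by have := dec_head_u HQ Ev zQ; rewrite eM leNgt Mz.
Qed.


Definition leS (x y : U + V) : bool :=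
  match x, y with
  | inl a, inl b => a <= b
  | inr a, inr b => a <= b
  | _, _ => false
  end.

Definition isMax (y p : U + V) : bool :=
  [&& p \in S, adj E y p & [forall z, ((z \in S) && adj E y z) ==> leS z p]].

Lemma ispred_isMax y p : ispred y p -> isMax y p.
Proof.
move=> Hpr; have [pS Hyp] := ispred_adj Hpr.
rewrite /isMax pS Hyp /=; apply/forallP => z; apply/implyP => /andP [zS Hyz].
move: Hpr Hyp zS Hyz; clear pS; case: y => y; case: p => p //; case: z => z //= Hpr _ zS Hyz.
- exact: KLU Hpr zS Hyz.
- exact: KLV Hpr zS Hyz.
Qed.

Lemma isMax_uniq y p q : isMax y p -> isMax y q -> p = q.
Proof.
case/and3P => pS Hp /forallP Fp; case/and3P => qS Hq /forallP Fq.
have := Fp q; rewrite qS Hq /= => H1.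
have := Fq p; rewrite pS Hp /= => H2.
move: H1 H2; clear Fp Fq pS Hp qS Hq; case: p => p; case: q => q //= H1 H2.
- by rewrite (@le_anti _ _ p q) // H1 H2.
- by rewrite (@le_anti _ _ p q) // H1 H2.
Qed.

Lemma dec2 b : adj E v b -> dec [:: v; b].
Proof.
move=> H; apply/and4P; split => //=; first by rewrite H.
- by case: (v) H => x; case: (b) => y.
- by case: (v) H => x; case: (b) => y.
Qed.

Lemma dec_ext s' q b a : dec (s' ++ [:: q; b]) -> adj E b a ->
  leS a q -> a != q -> dec (rcons s' q ++ [:: b; a]).
Proof.
move=> Hd Hba Haq Hne.
have -> : rcons s' q ++ [:: b; a] = (s' ++ [:: q; b]) ++ [:: a] by rewrite -cats1 -!catA.
case/and4P: Hd => Hp Hh Hu Hv; apply/and4P; split.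
- move: Hp; case: s' {Hh Hu Hv} => [|x s] /=; first by rewrite Hba => ->.
  by move=> H; rewrite cat_path H /= last_cat /= Hba.
- by case: s' Hh {Hp Hu Hv}.
- rewrite uverts_cat; move: Hu Haq Hne Hba; clear Hp Hh Hv; rewrite uverts_cat.
  case: a => a; case: q => q //; case: b => b //= Hu Haq Hne _.
  + rewrite -catA /= sorted_cat_cons -cats1 Hu /= andbT lt_neqAle Haq andbT.
    by apply: contraNneq Hne => ->.
  + by rewrite cats0.
- rewrite vverts_cat; move: Hv Haq Hne Hba; clear Hp Hh Hu; rewrite vverts_cat.
  case: a => a; case: q => q //; case: b => b //= Hu Haq Hne _.
  + by rewrite cats0.
  + rewrite -catA /= sorted_cat_cons -cats1 Hu /= andbT lt_neqAle Haq andbT.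
    by apply: contraNneq Hne => ->.
Qed.


Lemma adj_irr x : adj E x x = false.
Proof. by case: x. Qed.

Lemma pair_ok a b : a \in S -> b \in S -> adj E a b ->
  ((a != v) && isMax a b) || ((b != v) && isMax b a).
Proof.
move=> aS bS Hab.
have [av|av] := eqVneq a v.
  rewrite av in Hab; apply/orP; right; apply/andP; split.
    by apply/eqP => bv; rewrite bv adj_irr in Hab.
  by rewrite av; apply: ispred_isMax; exists [::]; exact: dec2.
have [bv|bv] := eqVneq b v.
  apply/orP; left; rewrite /= bv; apply: ispred_isMax; exists [::]; apply: dec2.
  by rewrite -bv adjC.
have [q Hq] := exists_pred bS bv.
have Mq := ispred_isMax Hq.
have [qa|qa] := eqVneq q a.
  by apply/orP; right; rewrite /= -qa Mq.
apply/orP; left; rewrite /=; apply: ispred_isMax.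
case: Hq => s' Hd; exists (rcons s' q); apply: dec_ext Hd _ _ _.
- by rewrite adjC.
- by case/and3P: Mq => _ _ /forallP /(_ a); rewrite aS adjC Hab.
- by rewrite eq_sym.
Qed.

Lemma no_repeat s2 x y : dec (rcons s2 x ++ [:: y; x]) -> adj E x y -> False.
Proof.
case/and4P => _ _ Hu Hv; move: Hu Hv.
rewrite -cats1 -catA /= uverts_cat vverts_cat.
case: x => x; case: y => y //=.
- by move/cat_sorted2 => [_] /=; rewrite ltxx.
- by move=> _ /cat_sorted2 [_] /=; rewrite ltxx.
Qed.

Lemma excl a b : a != v -> isMax a b -> b != v -> isMax b a -> False.
Proof.
move=> av Mab bv Mba.
have aS : a \in S by case/and3P: Mba.
have Hab : adj E a b by case/and3P: Mab.
have [p Hp] := exists_pred aS av.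
have pb := isMax_uniq (ispred_isMax Hp) Mab; subst p.
case: Hp => s'; case/lastP: s' => [|s2 c] Hd.
  by case/and4P: Hd => _ /= /eqP bv'; rewrite bv' eqxx in bv.
have Hd2 : dec (s2 ++ [:: c; b]).
  apply: (dec_prefix (t := [:: a])); last by case: s2 {Hd}.
  by move: Hd; rewrite -cats1 -!catA.
have ca := isMax_uniq (ispred_isMax (ex_intro _ s2 Hd2)) Mba; subst c.
exact: no_repeat Hd Hab.
Qed.


Definition hmap (e : U * V) : U + V :=
  if (inl e.1 != v) && isMax (inl e.1) (inr e.2) then inl e.1 else inr e.2.

Lemma hmap_spec e : e \in induced_edges E S ->
  (hmap e = inl e.1 /\ inl e.1 != v /\ isMax (inl e.1) (inr e.2)) \/
  (hmap e = inr e.2 /\ inr e.2 != v /\ isMax (inr e.2) (inl e.1)).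
Proof.
rewrite inE => /and3P [Ee uS wS].
have := pair_ok uS wS Ee; rewrite /hmap; case: ifP => [/andP [H1 H2] _|_ /= H].
  by left.
by right; case/andP: H => H1 H2.
Qed.

Lemma main_count : #|induced_edges E S| = (#|S| - 1)%N.
Proof.
have vS : v \in S.
  apply/HS; exists [:: v]; last by rewrite inE.
  by rewrite /dec_path_from /= eqxx; case: (v).
have inj : {in induced_edges E S &, injective hmap}.
  move=> [u1 w1] [u2 w2] /hmap_spec H1 /hmap_spec H2 /=.
  case: H1 => [[-> [_ M1]]|[-> [_ M1]]]; case: H2 => [[-> [_ M2]]|[-> [_ M2]]] //= [e].
  - by subst u2; have [->] := isMax_uniq M1 M2.
  - by subst w2; have [->] := isMax_uniq M1 M2.
have img : hmap @: induced_edges E S = S :\ v.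
  apply/setP => y; rewrite !inE; apply/imsetP/andP.
    move=> [e He ->]; have := He; rewrite inE => /and3P [_ uS wS].
    by case: (hmap_spec He) => [[-> [-> _]]|[-> [-> _]]].
  move=> [yv yS]; have [p Hp] := exists_pred yS yv.
  have Mp := ispred_isMax Hp; have [pS Hyp] := ispred_adj Hp.
  move: yv yS Mp pS Hyp; clear Hp; case: y => y; case: p => p // yv yS Mp pS Hyp.
  - exists (y, p); first by rewrite inE; apply/and3P; split.
    by rewrite /hmap /= yv Mp.
  - exists (p, y); first by rewrite inE; apply/and3P; split.
    rewrite /hmap /=; case: ifP => // /andP [H1 H2].
    by case: (excl H1 H2 yv Mp).
rewrite -(card_in_imset inj) img (cardsD1 v S) vS.
by rewrite add1n subn1.
Qed.

End M.

Theorem lemma5 (dU dV : Order.disp_t) (U : finOrderType dU) (V : finOrderType dV)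
  (E : U -> V -> bool) (HG : PRBG E) (v : U + V) (S : {set U + V})
  (HS : forall y, y \in S <-> Tr_spanned E v y) :
  #|induced_edges E S| = (#|S| - 1)%N.
Proof. exact: (@main_count dU dV U V E HG v S HS). Qed.
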